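(* Let $2\le d\le D$ be integers and $\bar d$ a sequence with $d\le d_i\le D$ for all $i$. There is a constant $C$ depending only on $D$ such that for all $n\ge2$, $$\beta_d\le\beta(n)\le\beta_D+\frac{C}{\log n},\qquad\text{where }\ \beta_x=\frac{\log x}{\log\frac{x^2}{x-1}}=\frac{1}{2-\frac{\log(x-1)}{\log x}}.$$
   Context: $p_i=\frac{d_i-1}{d_i^2}$, $k(n)=\min\{k\ge0:p_0p_1\cdots p_kn\le1\}$, $\beta(n)=\frac{\log(d_0d_1\cdots d_{k(n)})}{\log n}$. *)

(* Defs.v *)
From Stdlib Require Import Reals Lra Lia ClassicalEpsilon.
Open Scope R_scope.

Fixpoint prodR (f : nat -> R) (k : nat) : R :=
  match k with
  | O => f O
  | S k' => prodR f k' * f (S k')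
  end.

Definition pfac (ds : nat -> nat) (i : nat) : R :=
  (INR (ds i) - 1) / (INR (ds i)) ^ 2.

Definition IsK (ds : nat -> nat) (n : R) (k : nat) : Prop :=
  prodR (pfac ds) k * n <= 1 /\
  (forall j : nat, (j < k)%nat -> ~ (prodR (pfac ds) j * n <= 1)).

(* k(n) := min { k >= 0 : p_0 ... p_k n <= 1 } (chosen by Hilbert epsilon;
   it exists and is unique whenever all d_i >= 2) *)
Definition kn (ds : nat -> nat) (n : R) : nat :=
  epsilon (inhabits O) (fun k => IsK ds n k).

Definition beta (ds : nat -> nat) (n : R) : R :=
  ln (prodR (fun i => INR (ds i)) (kn ds n)) / ln n.

Definition beta_x (x : R) : R := ln x / ln (x ^ 2 / (x - 1)).

(* Main.v *)
Require Import Defs.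
From Stdlib Require Import Reals Lra Lia Classical ClassicalEpsilon Arith Wf_nat.
Open Scope R_scope.

Lemma ln_div x y : 0 < x -> 0 < y -> ln (x / y) = ln x - ln y.
Proof. intros. unfold Rdiv. rewrite ln_mult, ln_Rinv; try apply Rinv_0_lt_compat; auto. Qed.

Lemma ln_le x y : 0 < x -> x <= y -> ln x <= ln y.
Proof. intros H [H1|H1]. left; apply ln_increasing; auto. subst; lra. Qed.

Definition hh (x : R) : R := ln (x - 1) / ln x.

Lemma ln_pos2 x : 2 <= x -> 0 < ln x.
Proof. intro H. rewrite <- ln_1. apply ln_increasing; lra. Qed.

Lemma Lx_eq x : 1 < x -> ln (x ^ 2 / (x - 1)) = 2 * ln x - ln (x - 1).
Proof.
  intro H. rewrite ln_div; [|nra|lra].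
  rewrite ln_pow; [|lra]. simpl INR. ring.
Qed.

Lemma step x : 2 <= x -> ln (x - 1) * ln (x + 1) <= ln x * ln x.
Proof.
  intro H.
  assert (Hu : 0 <= ln (x - 1)) by (rewrite <- ln_1; apply ln_le; lra).
  assert (Hv : 0 <= ln (x + 1)) by (rewrite <- ln_1; apply ln_le; lra).
  assert (Hs : ln (x - 1) + ln (x + 1) <= ln x + ln x).
  { rewrite <- !ln_mult by lra. apply ln_le; nra. }
  assert (0 <= (2*ln x - (ln (x-1) + ln (x+1))) * (2*ln x + (ln (x-1) + ln (x+1)))) by (apply Rmult_le_pos; lra).
  pose proof (Rle_0_sqr (ln (x-1) - ln (x+1))). unfold Rsqr in *. nra.
Qed.

Lemma hstep y : 2 <= y -> hh y <= hh (y + 1).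
Proof.
  intro H. unfold hh. replace (y + 1 - 1) with y by ring.
  assert (A := ln_pos2 y H). assert (B := ln_pos2 (y+1) ltac:(lra)).
  replace (ln (y - 1) / ln y) with (ln (y-1) * ln (y+1) * / (ln y * ln (y+1))) by (field; lra).
  replace (ln y / ln (y+1)) with (ln y * ln y * / (ln y * ln (y+1))) by (field; lra).
  apply Rmult_le_compat_r; [left; apply Rinv_0_lt_compat; nra| apply step; lra].
Qed.

Lemma hmono a k : 2 <= a -> hh a <= hh (a + INR k).
Proof.
  intro H. induction k.
  - simpl. rewrite Rplus_0_r. lra.
  - rewrite S_INR. replace (a + (INR k + 1)) with ((a + INR k) + 1) by ring.
    eapply Rle_trans; [exact IHk|]. apply hstep. pose proof (pos_INR k). lra.
Qed.

Lemma hlt1 x : 2 <= x -> 0 <= hh x < 1.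
Proof.
  intro H. unfold hh. assert (A := ln_pos2 x H).
  assert (Hu : 0 <= ln (x - 1)) by (rewrite <- ln_1; apply ln_le; lra).
  assert (Hl : ln (x - 1) < ln x) by (apply ln_increasing; lra).
  split. apply Rmult_le_pos; [lra| left; apply Rinv_0_lt_compat; lra].
  apply (Rmult_lt_reg_r (ln x)); [lra|]. field_simplify; lra.
Qed.

Lemma bx_eq x : 2 <= x -> beta_x x = / (2 - hh x).
Proof.
  intro H. unfold beta_x, hh. rewrite Lx_eq by lra.
  assert (A := ln_pos2 x H).
  assert (Hl : ln (x - 1) < ln x) by (apply ln_increasing; lra).
  field. split; lra.
Qed.

Lemma bx_pos x : 2 <= x -> 0 < beta_x x.
Proof. intro H. rewrite bx_eq by lra. destruct (hlt1 x H). apply Rinv_0_lt_compat; lra. Qed.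

Lemma bx_mono (a b : nat) : (2 <= a)%nat -> (a <= b)%nat -> beta_x (INR a) <= beta_x (INR b).
Proof.
  intros Ha Hab.
  assert (A : 2 <= INR a) by (apply (le_INR 2) in Ha; simpl in Ha; lra).
  assert (B : 2 <= INR b) by (apply le_INR in Hab; lra).
  rewrite !bx_eq by lra.
  replace b with (a + (b - a))%nat by lia. rewrite plus_INR.
  pose proof (hmono (INR a) (b - a) A).
  destruct (hlt1 (INR a) A). destruct (hlt1 (INR a + INR (b - a))) as [E F].
  { pose proof (pos_INR (b-a)). lra. }
  apply Rinv_le_contravar; lra.
Qed.

Lemma term (d m D : nat) : (2 <= d)%nat -> (d <= m)%nat -> (m <= D)%nat ->
  beta_x (INR d) * ln (INR m ^ 2 / (INR m - 1)) <= ln (INR m) <=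
  beta_x (INR D) * ln (INR m ^ 2 / (INR m - 1)).
Proof.
  intros H1 H2 H3.
  assert (A : 2 <= INR m) by (apply (le_INR 2) in H1; apply le_INR in H2; simpl in H1; lra).
  assert (Lp : 0 < ln (INR m ^ 2 / (INR m - 1))).
  { rewrite Lx_eq by lra. assert (ln (INR m - 1) < ln (INR m)) by (apply ln_increasing; lra).
    pose proof (ln_pos2 _ A). lra. }
  assert (E : ln (INR m) = beta_x (INR m) * ln (INR m ^ 2 / (INR m - 1))).
  { unfold beta_x. field. lra. }
  rewrite E. split; apply Rmult_le_compat_r; try lra; apply bx_mono; lia.
Qed.

Lemma least (P : nat -> Prop) : (exists k, P k) -> exists k, P k /\ forall j, (j < k)%nat -> ~ P j.
Proof.
  intros [k Hk]. revert Hk.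
  induction k as [k IH] using (well_founded_induction lt_wf). intro Hk.
  destruct (classic (exists j, (j < k)%nat /\ P j)) as [[j [Hj Pj]]|N].
  - exact (IH j Hj Pj).
  - exists k; split; auto. intros j Hj Pj; apply N; eauto.
Qed.

Section S.
Variables (d D : nat) (ds : nat -> nat).
Hypothesis Hd : (2 <= d)%nat.
Hypothesis Hds : forall i, (d <= ds i)%nat /\ (ds i <= D)%nat.

Lemma dsge i : 2 <= INR (ds i).
Proof. destruct (Hds i). assert (2 <= ds i)%nat by lia. apply (le_INR 2) in H1. simpl in H1. lra. Qed.

Lemma pfac_bounds i : 0 < pfac ds i <= / 4.
Proof.
  unfold pfac. pose proof (dsge i). split.
  - apply Rdiv_lt_0_compat; nra.
  - apply (Rmult_le_reg_r (INR (ds i) ^ 2)); [nra|]. field_simplify; nra.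
Qed.

Lemma prod_small k : prodR (pfac ds) k <= / INR (S k).
Proof.
  induction k.
  - simpl. pose proof (pfac_bounds 0). lra.
  - simpl prodR. pose proof (pfac_bounds (S k)).
    assert (0 < prodR (pfac ds) k).
    { clear IHk. induction k; simpl; [apply pfac_bounds|].
      pose proof (pfac_bounds (S k)). nra. }
    rewrite !S_INR in *. pose proof (pos_INR k).
    apply Rle_trans with (/ (INR k + 1) * / 4).
    { apply Rmult_le_compat; lra. }
    rewrite <- Rinv_mult. apply Rinv_le_contravar; nra.
Qed.

Lemma inv k : 0 < prodR (fun i => INR (ds i)) k /\ 0 < prodR (pfac ds) k /\
  beta_x (INR d) * (- ln (prodR (pfac ds) k)) <= ln (prodR (fun i => INR (ds i)) k) <=
  beta_x (INR D) * (- ln (prodR (pfac ds) k)).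
Proof.
  assert (T : forall i, - ln (pfac ds i) = ln (INR (ds i) ^ 2 / (INR (ds i) - 1))).
  { intro i. pose proof (dsge i). unfold pfac. rewrite !ln_div by nra. ring. }
  induction k.
  - simpl. pose proof (dsge 0). pose proof (pfac_bounds 0). rewrite T.
    destruct (Hds 0). pose proof (term d (ds 0) D Hd H1 H2). repeat split; lra.
  - simpl prodR. destruct IHk as [A [B [C E]]].
    pose proof (dsge (S k)). pose proof (pfac_bounds (S k)).
    rewrite !ln_mult by lra. rewrite Ropp_plus_distr, T.
    destruct (Hds (S k)). pose proof (term d (ds (S k)) D Hd H1 H2).
    repeat split; try nra.
Qed.
End S.

Theorem mainTheorem8 :
  forall D : nat, exists C : R,
    forall (d : nat) (ds : nat -> nat),
      (2 <= d)%nat -> (d <= D)%nat ->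
      (forall i : nat, (d <= ds i)%nat /\ (ds i <= D)%nat) ->
      forall n : nat, (2 <= n)%nat ->
        beta_x (INR d) <= beta ds (INR n) /\
        beta ds (INR n) <= beta_x (INR D) + C / ln (INR n).
Proof.
  intro D. exists (ln (INR D)).
  intros d ds Hd HdD Hds n Hn.
  assert (N2 : 2 <= INR n) by (apply (le_INR 2) in Hn; simpl in Hn; lra).
  assert (LN := ln_pos2 _ N2).
  assert (HK : IsK ds (INR n) (kn ds (INR n))).
  { unfold kn. apply epsilon_spec. apply least.
    exists n. eapply Rle_trans.
    { apply Rmult_le_compat_r; [lra| apply (prod_small d D ds Hd Hds)]. }
    rewrite S_INR. apply (Rmult_le_reg_r (INR n + 1)); [lra|].
    field_simplify; lra. }
  destruct HK as [K1 K2].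
  set (k := kn ds (INR n)) in *.
  assert (Dge : (2 <= D)%nat) by lia.
  assert (BD := bx_pos (INR D) ltac:(apply (le_INR 2) in Dge; simpl in Dge; lra)).
  assert (Bd := bx_pos (INR d) ltac:(apply (le_INR 2) in Hd; simpl in Hd; lra)).
  unfold beta. fold k.
  destruct (inv d D ds Hd Hds k) as [Q [P [I1 I2]]].
  split.
  - assert (ln (prodR (pfac ds) k * INR n) <= 0).
    { rewrite <- ln_1. destruct K1. left; apply ln_increasing; nra. rewrite H; lra. }
    rewrite ln_mult in H by lra.
    apply (Rmult_le_reg_r (ln (INR n))); [lra|].
    replace (_ / ln (INR n) * ln (INR n)) with (ln (prodR (fun i => INR (ds i)) k)) by (field; lra).
    nra.
  - apply (Rmult_le_reg_r (ln (INR n))); [lra|].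
    replace (_ / ln (INR n) * ln (INR n)) with (ln (prodR (fun i => INR (ds i)) k)) by (field; lra).
    replace ((beta_x (INR D) + ln (INR D) / ln (INR n)) * ln (INR n))
      with (beta_x (INR D) * ln (INR n) + ln (INR D)) by (field; lra).
    destruct k as [|k'] eqn:Ek.
    + simpl. destruct (Hds 0%nat). pose proof (dsge d D ds Hd Hds 0%nat).
      assert (ln (INR (ds 0%nat)) <= ln (INR D)) by (apply ln_le; [lra| apply le_INR; lia]).
      nra.
    + simpl prodR. destruct (inv d D ds Hd Hds k') as [Q' [P' [_ I2']]].
      pose proof (dsge d D ds Hd Hds (S k')). destruct (Hds (S k')).
      rewrite ln_mult by lra.
      assert (ln (INR (ds (S k'))) <= ln (INR D)) by (apply ln_le; [lra| apply le_INR; lia]).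
      assert (Hg : 1 < prodR (pfac ds) k' * INR n).
      { apply Rnot_le_lt. apply K2. lia. }
      assert (0 < ln (prodR (pfac ds) k' * INR n)) by (rewrite <- ln_1; apply ln_increasing; lra).
      rewrite ln_mult in H3 by lra.
      nra.
Qed.
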